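(* Let $\mathbf{A}\in\mathbb{R}^{n\times n}$ and $\mathbf{V}\in\mathbb{R}^{n\times r}$ with $r\le n$, and let $\mathbf{Q}_\perp\in\mathbb{R}^{n\times(n-r)}$ be the last $n-r$ columns of the orthogonal factor $\mathbf{Q}_{\rm full}$ of a full QR factorization $\mathbf{V}=\mathbf{Q}_{\rm full}\begin{bmatrix}\mathbf{R}\\\mathbf{0}\end{bmatrix}$. Then for every $k\ge r$ the polynomial $a(t)=e_k(\mathbf{A}+t\mathbf{V}\mathbf{V}^\top)$ has degree at most $r$, and its coefficient of $t^r$ equals \[\det(\mathbf{V}^\top\mathbf{V})\,e_{k-r}(\mathbf{Q}_\perp^\top\mathbf{A}\mathbf{Q}_\perp).\] In particular, for $k=n$, the coefficient of $t^r$ in $\det(\mathbf{A}+t\mathbf{V}\mathbf{V}^\top)$ equals $\det(\mathbf{V}^\top\mathbf{V})\det(\mathbf{Q}_\perp^\top\mathbf{A}\mathbf{Q}_\perp)=(-1)^r\det\begin{bmatrix}\mathbf{A}&\mathbf{V}\\\mathbf{V}^\top&0\end{bmatrix}$.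
   Context: For a square matrix $\mathbf{B}$ with eigenvalues $\lambda_1,\ldots,\lambda_m$, $e_k(\mathbf{B})=e_k(\lambda_1,\ldots,\lambda_m)$, where $e_k(\lambda_1,\ldots,\lambda_m)=\sum_{\#\mathcal{Y}=k}\prod_{i\in\mathcal{Y}}\lambda_i$ is the $k$-th elementary symmetric polynomial, with $e_0=1$; equivalently $e_k(\mathbf{B})$ is the sum of all $k\times k$ principal minors of $\mathbf{B}$. *)

(* Defs.v *)
From HB Require Import structures.
From mathcomp Require Import all_boot all_order all_algebra.
Set Implicit Arguments. Unset Strict Implicit. Unset Printing Implicit Defensive.
Import Order.TTheory GRing.Theory Num.Theory.
Local Open Scope ring_scope.

(* e_k(B) for a square matrix B over a commutative ring: the sum of all
   k x k principal minors of B (e_0 = 1; e_k = 0 for k > m). *)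
Definition ek (R : comRingType) (m : nat) (B : 'M[R]_m) (k : nat) : R :=
  \sum_(S : {set 'I_m} | #|S| == k)
     \det (\matrix_(i, j) B (@enum_val _ (mem S) i) (@enum_val _ (mem S) j)).

Lemma last_cols_subproof (n r : nat) (j : 'I_(n - r)) : (r + j < n)%N.
Proof. by have := ltn_ord j; rewrite ltn_subRL. Qed.

Definition last_cols (R : Type) (m n r : nat) (Q : 'M[R]_(m, n)) : 'M[R]_(m, n - r) :=
  \matrix_(i, j) Q i (Ordinal (last_cols_subproof j)).

(* [R; 0] : the r x r matrix Rm padded with n - r zero rows below *)
Definition pad_rows (R : pzRingType) (n r : nat) (Rm : 'M[R]_r) : 'M[R]_(n, r) :=
  \matrix_(i, j) (if insub (val i) is Some i' then Rm i' j else 0).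

Definition pencil (R : comRingType) (n r : nat) (A : 'M[R]_n) (V : 'M[R]_(n, r))
  : 'M[{poly R}]_n :=
  map_mx polyC A + 'X *: map_mx polyC (V *m V^T).

(* Main.v *)
Require Import Defs.
From HB Require Import structures.
From mathcomp Require Import all_boot all_order all_algebra perm zify.
Set Implicit Arguments. Unset Strict Implicit. Unset Printing Implicit Defensive.
Import Order.TTheory GRing.Theory Num.Theory.
Local Open Scope ring_scope.

Section Gen.
Variable S : comRingType.

Lemma det_add_rows m (U W : 'M[S]_m) :
  \det (U + W) = \sum_(J : {set 'I_m}) \det (\matrix_(i, j) if i \in J then W i j else U i j).
Proof.
rewrite /determinant.
transitivity (\sum_(s : 'S_m) \sum_(J : {set 'I_m}) (-1) ^+ s * \prod_i (if i \in J then W i (s i) else U i (s i))).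
  apply: eq_bigr => s _; rewrite -big_distrr /=; congr (_ * _).
  rewrite (eq_bigr (fun i => W i (s i) + U i (s i))); last by move=> i _; rewrite !mxE addrC.
  by rewrite bigA_distr.
rewrite exchange_big /=; apply: eq_bigr => J _; apply: eq_bigr => s _.
by congr (_ * _); apply: eq_bigr => i _; rewrite !mxE; case: ifP.
Qed.

Definition Kmx m (U W : 'M[S]_m) (J : {set 'I_m}) : 'M[S]_m :=
  \matrix_(i, j) if i \in J then W i j else U i j.

Definition minor m (M : 'M[S]_m) (J : {set 'I_m}) : 'M[S]_#|J| :=
  \matrix_(i, j) M (@enum_val _ (mem J) i) (@enum_val _ (mem J) j).

Lemma det_scale_rows m (c : 'I_m -> S) (M : 'M[S]_m) :
  \det (\matrix_(i, j) (c i * M i j)) = (\prod_i c i) * \det M.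
Proof.
have -> : \matrix_(i, j) (c i * M i j) = diag_mx (\row_i c i) *m M.
  by rewrite mul_diag_mx; apply/matrixP => i j; rewrite !mxE.
by rewrite det_mulmx det_diag; congr (_ * _); apply: eq_bigr => i _; rewrite mxE.
Qed.

Lemma det_add_scale m (t : S) (U W : 'M[S]_m) :
  \det (U + t *: W) = \sum_(J : {set 'I_m}) t ^+ #|J| * \det (Kmx U W J).
Proof.
rewrite det_add_rows; apply: eq_bigr => J _.
have -> : \matrix_(i, j) (if i \in J then (t *: W) i j else U i j)
   = \matrix_(i, j) ((if i \in J then t else 1) * Kmx U W J i j).
  by apply/matrixP => i j; rewrite !mxE; case: ifP; rewrite ?mul1r.
rewrite det_scale_rows; congr (_ * _).
by rewrite -big_mkcond /= prodr_const.
Qed.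

Lemma det_zero_row m (M : 'M[S]_m) i0 : (forall j, M i0 j = 0) -> \det M = 0.
Proof.
by move=> h; rewrite (expand_det_row _ i0) big1 // => j _; rewrite h mul0r.
Qed.

Lemma det_mxsub_inj p m (f : 'I_p -> 'I_m) (M : 'M[S]_m) :
  injective f -> p = m -> \det (mxsub f f M) = \det M.
Proof.
move=> finj e; subst p.
pose s := perm finj.
have -> : mxsub f f M = row_perm s (col_perm s M).
  by apply/matrixP => i j; rewrite !mxE !permE.
rewrite row_permE col_permE !det_mulmx !det_perm odd_permV.
rewrite mulrCA -signr_addb addbb mulr1; done.
Qed.

Lemma det_principal m (M : 'M[S]_m) (J : {set 'I_m}) :
  \det (Kmx 1%:M M J) = \det (minor M J).
Proof.
have e : (#|J| + #|~: J| = m)%N by rewrite cardsC card_ord.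
pose phi (k : 'I_(#|J| + #|~: J|)) : 'I_m :=
  match split k with inl x => @enum_val _ (mem J) x | inr y => @enum_val _ (mem (~: J)) y end.
have phil x : phi (lshift _ x) = enum_val x by rewrite /phi (unsplitK (inl _ x)).
have phir y : phi (rshift _ y) = enum_val y by rewrite /phi (unsplitK (inr _ y)).
have phi_inj : injective phi.
  move=> k1 k2; rewrite -[k1]splitK -[k2]splitK.
  case: (split k1) => x1; case: (split k2) => x2 /=;
    rewrite ?phil ?phir => h.
  - by rewrite (enum_val_inj h).
  - by move: (enum_valP x1) (enum_valP x2); rewrite -h inE => ->.
  - by move: (enum_valP x1) (enum_valP x2); rewrite -h inE => /negbTE ->.
  - by rewrite (enum_val_inj h).
rewrite -(det_mxsub_inj (Kmx 1%:M M J) phi_inj e).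
rewrite -[mxsub _ _ _]submxK.
have -> : dlsubmx (mxsub phi phi (Kmx 1%:M M J)) = 0.
  apply/matrixP => i j; rewrite !mxE phil phir.
  have := enum_valP i; rewrite inE => /negbTE ->.
  case: eqP => // h; have := enum_valP j; rewrite -h.
  by have := enum_valP i; rewrite inE => /negbTE ->.
rewrite det_ublock.
have -> : drsubmx (mxsub phi phi (Kmx 1%:M M J)) = 1%:M.
  apply/matrixP => i j; rewrite !mxE !phir.
  have := enum_valP i; rewrite inE => /negbTE ->.
  by rewrite (inj_eq enum_val_inj).
rewrite det1 mulr1; congr (\det _); apply/matrixP => i j.
by rewrite !mxE !phil enum_valP.
Qed.
End Gen.

Section Charp.
Variable S : comRingType.

Lemma det_charp m (M : 'M[S]_m) :
  \det ('X%:M + map_mx polyC M) =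
  \sum_(J : {set 'I_m}) 'X^(m - #|J|) * (\det (minor M J))%:P.
Proof.
rewrite addrC -scalemx1 det_add_scale (reindex_inj (@setC_inj _)) /=.
apply: eq_bigr => J _.
have -> : Kmx (map_mx polyC M) 1%:M (~: J) = Kmx 1%:M (map_mx polyC M) J.
  by apply/matrixP => i j; rewrite !mxE inE; case: (i \in J).
rewrite det_principal.
have -> : minor (map_mx polyC M) J = map_mx polyC (minor M J).
  by apply/matrixP => i j; rewrite !mxE.
rewrite det_map_mx; congr (_ ^+ _ * _).
have := cardsC J; rewrite card_ord => h; exact: (canRL (addKn _) h).
Qed.

Lemma ek_coef m (M : 'M[S]_m) k : (k <= m)%N ->
  ek M k = (\det ('X%:M + map_mx polyC M))`_(m - k).
Proof.
move=> km; rewrite det_charp coef_sum /ek big_mkcond /=; apply: eq_bigr => J _.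
rewrite mulrC coefCM coefXn.
have hJ : (#|J| <= m)%N by rewrite -[X in (_ <= X)%N]card_ord max_card.
have -> : (m - k == m - #|J|)%N = (#|J| == k) by apply/eqP/eqP; lia.
by case: eqP; rewrite ?mulr1 ?mulr0.
Qed.

Lemma ek_gt m (M : 'M[S]_m) k : (m < k)%N -> ek M k = 0.
Proof.
move=> mk; rewrite /ek big1 // => J /eqP hJ; exfalso.
have : (#|J| <= m)%N by rewrite -[X in (_ <= X)%N]card_ord max_card.
lia.
Qed.

Lemma ek_top m (M : 'M[S]_m) : ek M m = \det M.
Proof.
rewrite /ek (big_pred1 setT); last first.
  move=> J /=; apply/eqP/eqP => [h|->]; last by rewrite cardsT card_ord.
  by apply/eqP; rewrite eqEcard subsetT cardsT card_ord h leqnn.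
have e : #|[set: 'I_m]| = m by rewrite cardsT card_ord.
exact: (det_mxsub_inj M (@enum_val_inj _ (mem [set: 'I_m])) e).
Qed.
End Charp.

Lemma coef_pencil (S : comRingType) p (L : {set 'I_p}) (U0 W0 : 'M[S]_p) :
  (forall i j, i \notin L -> W0 i j = 0) ->
  forall j, (#|L| <= j)%N ->
  (\det (map_mx polyC U0 + 'X *: map_mx polyC W0))`_j =
    if j == #|L| then \det (Kmx U0 W0 L) else 0.
Proof.
move=> Wz j hj; rewrite det_add_scale coef_sum.
have hK J : Kmx (map_mx polyC U0) (map_mx polyC W0) J = map_mx polyC (Kmx U0 W0 J).
  by apply/matrixP => i k; rewrite !mxE; case: ifP.
under eq_bigr => J _ do rewrite hK det_map_mx mulrC coefCM coefXn.
rewrite (bigD1 L) //= big1 ?addr0.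
  by case: eqP; rewrite ?mulr1 ?mulr0.
move=> J hJL; have [ejJ|_] := eqVneq j #|J|; last by rewrite mulr0.
rewrite mulr1.
have : ~~ (J \subset L).
  apply/negP => sJL; move/negP: hJL; apply.
  by rewrite eqEcard sJL -ejJ.
case/subsetPn => i iJ iL; apply: (@det_zero_row _ _ _ i) => k.
by rewrite mxE iJ Wz.
Qed.

Definition fsh n r (j : 'I_(n - r)) : 'I_n := Ordinal (@last_cols_subproof n r j).

Lemma det_castmx (S : comRingType) m m' (e : m = m') (M : 'M[S]_m) :
  \det (castmx (e, e) M) = \det M.
Proof. by case: m' / e; rewrite castmx_id. Qed.

Lemma card_low n r (hrn : (r <= n)%N) : #|[set i : 'I_n | (i < r)%N]| = r.
Proof.
have -> : [set i : 'I_n | (i < r)%N] = [set widen_ord hrn i | i in 'I_r].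
  apply/setP => i; rewrite inE; apply/idP/imsetP => [ir|[i' _ ->]] //=.
  by exists (Ordinal ir) => //; apply: val_inj.
by rewrite card_imset ?card_ord // => a b /(congr1 val) /= /val_inj.
Qed.

Lemma det_lowblock (S : comRingType) n r (hrn : (r <= n)%N) (Cr : 'M[S]_r) (C U : 'M[S]_n) :
  (forall i j : 'I_n, (r <= j)%N -> C i j = 0) ->
  (forall i j : 'I_r, C (widen_ord hrn i) (widen_ord hrn j) = Cr i j) ->
  \det (Kmx U C [set i : 'I_n | (i < r)%N]) = \det Cr * \det (mxsub (@fsh n r) (@fsh n r) U).
Proof.
move=> Cz hCr.
have e : n = (r + (n - r))%N by rewrite subnKC.
rewrite -(det_castmx e) -[castmx _ _]submxK.
have -> : ursubmx (castmx (e, e) (Kmx U C [set i : 'I_n | (i < r)%N])) = 0.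
  by apply/matrixP => i j; rewrite !mxE castmxE !mxE inE /= ltn_ord Cz //= leq_addr.
rewrite det_lblock; congr (_ * _); congr (\det _); apply/matrixP => i j.
  rewrite !mxE castmxE !mxE inE /= ltn_ord -hCr; congr (C _ _); exact: val_inj.
rewrite !mxE castmxE !mxE inE /= ltnNge leq_addr /=; congr (U _ _); exact: val_inj.
Qed.

Lemma ek_conj (S : comRingType) m (U M : 'M[S]_m) :
  U *m U^T = 1%:M -> forall k, ek (U *m M *m U^T) k = ek M k.
Proof.
move=> hU k; case: (leqP k m) => km; last by rewrite !ek_gt.
rewrite !ek_coef //; congr (_`_ _).
set U' := map_mx polyC U.
have hU' : U' *m U'^T = 1%:M by rewrite /U' map_trmx -map_mxM hU map_mx1.
have -> : 'X%:M + map_mx polyC (U *m M *m U^T) = U' *m ('X%:M + map_mx polyC M) *m U'^T.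
  rewrite mulmxDr mulmxDl.
  have -> : U' *m 'X%:M *m U'^T = 'X%:M by rewrite scalar_mxC -mulmxA hU' mulmx1.
  by rewrite !map_mxM /U' map_trmx.
by rewrite !det_mulmx mulrAC -det_mulmx hU' det1 mul1r.
Qed.

Lemma ek_pencil_coef (S : comRingType) n (B C : 'M[S]_n) k j : (k <= n)%N ->
  (ek (map_mx polyC B + 'X *: map_mx polyC C) k)`_j =
  (\det (map_mx polyC ('X%:M + map_mx polyC B) + 'X *: map_mx polyC (map_mx polyC C)))`_j`_(n - k).
Proof.
move=> kn; rewrite ek_coef // -coef_swapXY -det_map_mx.
apply: (congr1 (fun p : {poly {poly S}} => p`_j`_(n - k))); congr (\det _); apply/matrixP => a b; rewrite !mxE.
rewrite !rmorphD rmorphMn /= swapXY_X !swapXY_polyC !map_polyC rmorphM /= map_polyX map_polyC rmorphMn addrA.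
by [].
Qed.

Lemma PtP (S : comRingType) n r (hrn : (r <= n)%N) (Rm : 'M[S]_r) (P : 'M[S]_(n, r)) :
  (forall (i : 'I_n) l, (r <= i)%N -> P i l = 0) ->
  (forall i l, P (widen_ord hrn i) l = Rm i l) -> P^T *m P = Rm^T *m Rm.
Proof.
move=> hN hE; apply/matrixP => i j; rewrite !mxE (bigID (fun l : 'I_n => (l < r)%N)) /=.
rewrite [X in _ + X]big1 ?addr0; last by move=> l; rewrite -leqNgt => hl; rewrite !mxE hN // mul0r.
by rewrite (big_ord_narrow hrn); apply: eq_bigr => l _; rewrite !mxE !hE.
Qed.

Lemma PPt_low (S : comRingType) n r (hrn : (r <= n)%N) (Rm : 'M[S]_r) (P : 'M[S]_(n, r)) :
  (forall i l, P (widen_ord hrn i) l = Rm i l) ->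
  forall i j, (P *m P^T) (widen_ord hrn i) (widen_ord hrn j) = (Rm *m Rm^T) i j.
Proof.
by move=> hE i j; rewrite !mxE; apply: eq_bigr => l _; rewrite !mxE !hE.
Qed.

Lemma PPt_z (S : comRingType) n r (Rm : 'M[S]_r) (P : 'M[S]_(n, r)) :
  (forall (i : 'I_n) l, (r <= i)%N -> P i l = 0) ->
  forall i j : 'I_n, (r <= i)%N || (r <= j)%N -> (P *m P^T) i j = 0.
Proof.
move=> hN i j /orP h; rewrite !mxE big1 // => l _; rewrite !mxE.
by case: h => h; [rewrite (hN i) ?mul0r | rewrite (hN j) ?mulr0].
Qed.

Lemma padN (S : comRingType) n r (Rm : 'M[S]_r) (i : 'I_n) l :
  (r <= i)%N -> pad_rows n Rm i l = 0.
Proof. by move=> hi; rewrite mxE; case: insubP => [u ir _|_ //]; rewrite ltnNge hi in ir. Qed.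

Lemma padE (S : comRingType) n r (hrn : (r <= n)%N) (Rm : 'M[S]_r) i l :
  pad_rows n Rm (widen_ord hrn i) l = Rm i l.
Proof.
rewrite mxE; case: insubP => [u _ hu|]; last by rewrite /= ltn_ord.
by congr (Rm _ _); apply: val_inj.
Qed.

Lemma fsh_inj n r : injective (@fsh n r).
Proof. by move=> a b /(congr1 val) /= /addnI /val_inj. Qed.

Lemma Qperp_E (S : comRingType) n r (A Q : 'M[S]_n) :
  (last_cols r Q)^T *m A *m last_cols r Q = mxsub (@fsh n r) (@fsh n r) (Q^T *m A *m Q).
Proof.
rewrite /last_cols; apply/matrixP => i j; rewrite !mxE; apply: eq_bigr => l _; rewrite !mxE.
by congr (_ * _); apply: eq_bigr => l' _; rewrite !mxE.
Qed.

Lemma part1 (R : realFieldType) (n r : nat) (A : 'M[R]_n) (V : 'M[R]_(n, r))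
  (Q : 'M[R]_n) (Rm : 'M[R]_r) (hrn : (r <= n)%N) :
  Q^T *m Q = 1%:M -> V = Q *m pad_rows n Rm -> forall k, (r <= k)%N ->
     (size (ek (pencil A V) k) <= r.+1)%N /\
     (ek (pencil A V) k)`_r = \det (V^T *m V) * ek ((last_cols r Q)^T *m A *m last_cols r Q) (k - r).
Proof.
move=> hQ hV k rk.
set P := pad_rows n Rm.
have hQ' := mulmx1C hQ.
set B := Q^T *m A *m Q.
have eA : Q *m B *m Q^T = A by rewrite /B !mulmxA hQ' mul1mx -mulmxA hQ' mulmx1.
have eV : Q *m (P *m P^T) *m Q^T = V *m V^T by rewrite hV trmx_mul !mulmxA.
have hpen : pencil A V = map_mx polyC Q *m pencil B P *m (map_mx polyC Q)^T.
  rewrite /pencil mulmxDr mulmxDl -scalemxAr -scalemxAl map_trmx -!map_mxM.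
  by rewrite eA eV.
have hU : map_mx polyC Q *m (map_mx polyC Q)^T = 1%:M.
  by rewrite map_trmx -map_mxM hQ' map_mx1.
have hVtV : \det (V^T *m V) = \det (Rm *m Rm^T).
  rewrite hV trmx_mul -mulmxA (mulmxA Q^T) hQ mul1mx.
  by rewrite (PtP (padN Rm) (padE hrn Rm)) !det_mulmx !det_tr mulrC.
rewrite hpen (ek_conj _ hU) hVtV Qperp_E.
have [kn|nk] := leqP k n; last first.
  rewrite ek_gt // [ek _ (k - r)]ek_gt ?mulr0 ?size_poly0 ?coef0 //; lia.
set U0 := 'X%:M + map_mx polyC B.
set W0 := map_mx polyC (P *m P^T) : 'M[{poly R}]_n.
have coefs j : (ek (pencil B P) k)`_j =
    (\det (map_mx polyC U0 + 'X *: map_mx polyC W0))`_j`_(n - k).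
  exact: ek_pencil_coef.
have Wz : forall i j, i \notin [set i : 'I_n | (i < r)%N] -> W0 i j = 0.
  move=> i j; rewrite inE -leqNgt => hi; rewrite mxE (PPt_z Rm (padN Rm)) ?hi //.
have hc j : (r <= j)%N -> (\det (map_mx polyC U0 + 'X *: map_mx polyC W0))`_j =
    if j == r then \det (Kmx U0 W0 [set i : 'I_n | (i < r)%N]) else 0.
  by move=> hj; rewrite (coef_pencil U0 Wz) card_low.
split.
  apply/leq_sizeP => j hj; rewrite coefs hc ?(ltnW hj) //.
  by rewrite gtn_eqF // coef0.
rewrite coefs hc // eqxx.
rewrite (@det_lowblock _ n r hrn (map_mx polyC (Rm *m Rm^T))); first last.
- by move=> i j; rewrite /W0 [RHS]mxE [LHS]mxE (PPt_low (padE hrn Rm)).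
- by move=> i j hj; rewrite /W0 mxE (PPt_z Rm (padN Rm)) ?hj ?orbT.
rewrite det_map_mx coefCM.
have -> : mxsub (@fsh n r) (@fsh n r) U0 = 'X%:M + map_mx polyC (mxsub (@fsh n r) (@fsh n r) B).
  by apply/matrixP => i j; rewrite !mxE (inj_eq (@fsh_inj n r)).
have -> : (n - k = (n - r) - (k - r))%N by lia.
by rewrite -ek_coef //; lia.
Qed.

Lemma card_hi n r : #|[set i : 'I_(n + r) | (n <= i)%N]| = r.
Proof.
have -> : [set i : 'I_(n + r) | (n <= i)%N] = [set rshift n j | j in 'I_r].
  apply/setP => i; rewrite inE; apply/idP/imsetP => [ni|[i' _ ->]] /=; last exact: leq_addr.
  have h : (i - n < r)%N by rewrite ltn_subLR // ltn_ord.
  by exists (Ordinal h) => //; apply: val_inj => /=; rewrite subnKC.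
by rewrite card_imset ?card_ord //; exact: rshift_inj.
Qed.

Lemma part3 (R : comRingType) n r (A : 'M[R]_n) (V : 'M[R]_(n, r)) :
  (-1) ^+ r * (\det (pencil A V))`_r = \det (block_mx A V V^T (0 : 'M[R]_r)).
Proof.
pose Gt := block_mx (map_mx polyC A) ('X *: map_mx polyC V) (map_mx polyC V^T) ((-1)%:M)
   : 'M[{poly R}]_(n + r).
have h1 : \det Gt = (-1) ^+ r * \det (pencil A V).
  have : Gt *m block_mx 1%:M 0 (map_mx polyC V^T) 1%:M =
         block_mx (pencil A V) ('X *: map_mx polyC V) 0 ((-1)%:M).
    rewrite mulmx_block !mulmx1 !mulmx0 !add0r mul_scalar_mx scaleN1r addrN.
    by rewrite /pencil map_mxM -scalemxAl.
  move/(congr1 determinant); rewrite det_mulmx det_lblock !det1 mulr1 det_ublock det_scalar.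
  by rewrite mulr1 => ->; rewrite mulrC.
have h2 : (\det Gt)`_r = \det (block_mx A V V^T (0 : 'M[R]_r)).
  rewrite -det_tr.
  pose U0 := block_mx A^T V 0 ((-1)%:M) : 'M[R]_(n + r).
  pose W0 := block_mx 0 0 V^T 0 : 'M[R]_(n + r).
  have -> : Gt^T = map_mx polyC U0 + 'X *: map_mx polyC W0.
    rewrite /Gt tr_block_mx !map_block_mx scale_block_mx add_block_mx.
    rewrite !map_mx0 !scaler0 !addr0 add0r !map_trmx trmxK tr_scalar_mx map_scalar_mx /=.
    rewrite rmorphN1; congr block_mx.
    - by apply/matrixP => i j; rewrite !mxE.
    - by apply/matrixP => i j; rewrite !mxE rmorphN1 mulNrn.
  have Wz : forall i j, i \notin [set i : 'I_(n + r) | (n <= i)%N] -> W0 i j = 0.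
    move=> i j; rewrite inE; rewrite -[i]splitK; case: (split i) => i' /=.
      by move=> _; rewrite -[j]splitK; case: (split j) => j' /=; rewrite ?block_mxEul ?block_mxEur mxE.
    by rewrite leq_addr.
  rewrite (coef_pencil U0 Wz) card_hi // eqxx -[RHS]det_tr; congr (\det _).
  apply/matrixP => i j; rewrite tr_block_mx trmxK trmx0.
  rewrite -[i]splitK -[j]splitK; case: (split i) => i'; case: (split j) => j';
    rewrite /= mxE inE /= ?leq_addr ?(leqNgt n i') ?ltn_ord /=
      ?block_mxEul ?block_mxEur ?block_mxEdl ?block_mxEdr //.
rewrite -h2 h1.
have -> : (-1) ^+ r = ((-1) ^+ r)%:P :> {poly R} by rewrite rmorphXn rmorphN1.
by rewrite coefCM.
Qed.

Theorem lemma3p10 (R : realFieldType) (n r : nat) (A : 'M[R]_n) (V : 'M[R]_(n, r))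
  (Qfull : 'M[R]_n) (Rm : 'M[R]_r) :
  (r <= n)%N ->
  Qfull^T *m Qfull = 1%:M ->
  is_trig_mx Rm^T ->
  V = Qfull *m pad_rows n Rm ->
  let Qperp := last_cols r Qfull in
  (forall k : nat, (r <= k)%N ->
     (size (ek (pencil A V) k) <= r.+1)%N /\
     (ek (pencil A V) k)`_r = \det (V^T *m V) * ek (Qperp^T *m A *m Qperp) (k - r))
  /\
  (\det (pencil A V))`_r = \det (V^T *m V) * \det (Qperp^T *m A *m Qperp)
  /\
  \det (V^T *m V) * \det (Qperp^T *m A *m Qperp)
    = (-1) ^+ r * \det (block_mx A V V^T (0 : 'M[R]_r)).
Proof.
move=> hrn hQ _ hV Qperp.
have P1 := @part1 R n r A V Qfull Rm hrn hQ hV.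
have h2 : (\det (pencil A V))`_r = \det (V^T *m V) * \det (Qperp^T *m A *m Qperp).
  by have [_] := P1 n hrn; rewrite !ek_top.
split; first exact: P1.
split => //.
rewrite -h2 -(part3 A V) mulrA -exprD -signr_odd oddD addbb expr0 mul1r.
done.
Qed.
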